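(* An infinite countable locally finite abelian group $A$ possesses an increasing sequence $(Y_n)_{n=1}^\infty$ of finite subsets, each of which is individually $4$-incompressible, such that $|Y_{n-1}|<|Y_n|\le2|Y_{n-1}|$ for all $n$.
   Context: A group is locally finite if every finitely generated subgroup is finite. A finite set $Y\subseteq A$ containing $0$ is individually $C$-incompressible if for every sequence of translates $\{Y+f_i\}_{i=1}^I$ with $f_i\notin\bigcup_{j<i}(Y+f_j)$ for all $i$, the number of sets $Y+f_i$ containing $0$ is at most $C$. *)

(* Defs.v *)
From HB Require Import structures.
From mathcomp Require Import all_boot all_order all_algebra.
From mathcomp Require Import finmap.
Set Implicit Arguments. Unset Strict Implicit. Unset Printing Implicit Defensive.
Import Order.TTheory GRing.Theory.
Local Open Scope ring_scope.
Local Open Scope fset_scope.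

Definition gen_subgroup (A : zmodType) (s : seq A) (x : A) : Prop :=
  exists c : 'I_(size s) -> int, x = \sum_(i < size s) (s`_i *~ c i).

Definition finite_pred (A : eqType) (P : A -> Prop) : Prop :=
  exists l : seq A, forall x, P x -> x \in l.

Definition locally_finite (A : zmodType) : Prop :=
  forall s : seq A, finite_pred (gen_subgroup s).

Definition infinite_type (A : eqType) : Prop := ~ finite_pred (fun _ : A => True).

Definition in_translate (A : countZmodType) (Y : {fset A}) (f x : A) : bool :=
  (x - f) \in Y.

(* Y is individually C-incompressible: 0 \in Y, and for every finite sequence
   of translates Y + f_1, ..., Y + f_I with f_i \notin \bigcup_{j<i} (Y + f_j),
   the number of i with 0 \in Y + f_i is at most C. *)
Definition indiv_incompressible (A : countZmodType) (C : nat) (Y : {fset A}) : Prop :=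
  ((0%R : A) \in Y) /\
  forall fs : seq A,
    (forall i j : nat, (i < size fs)%N -> (j < i)%N ->
        ~~ in_translate Y fs`_j fs`_i) ->
    (count (fun f => in_translate Y f (0%R : A)) fs <= C)%N.

(* Main.v *)
Require Import Defs.
From HB Require Import structures.
From mathcomp Require Import all_boot all_order all_algebra.
From mathcomp Require Import finmap.
From mathcomp Require Import zify.
From Stdlib Require Import Classical ClassicalEpsilon.
Local Open Scope ring_scope.
Local Open Scope fset_scope.
Local Open Scope ring_scope.
Import GRing.Theory.

Definition good (A : countZmodType) (Y : {fset A}) : Prop :=
  exists (H : {fset A}) (a : A) (lo hi : int),
  [/\ (0 : A) \in H, (forall x y, x \in H -> y \in H -> x - y \in H),
      lo <= 0 <= hi, (hi == - lo) || (hi == 1 - lo) &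
      forall x, x \in Y <-> exists h t, [/\ h \in H, lo <= t <= hi & x = h + a *~ t]].

Arguments good {A}.

Lemma mulz_in (A : countZmodType) (H : {fset A}) :
  (0 : A) \in H -> (forall x y, x \in H -> y \in H -> x - y \in H) ->
  forall x z, x \in H -> x *~ z \in H.
Proof.
move=> H0 Hs x z xH.
have Hn : forall n, x *+ n \in H.
  elim=> [|n IH]; first by rewrite mulr0n.
  rewrite mulrSr; have := Hs _ _ IH (Hs _ _ H0 xH); by rewrite sub0r opprK.
case: z => n; first exact: Hn.
rewrite NegzE mulrNz; have := Hs _ _ H0 (Hn n.+1); by rewrite sub0r.
Qed.

Lemma good_incomp (A : countZmodType) (Y : {fset A}) : good Y -> indiv_incompressible 4 Y.
Proof.
move=> [H [a [lo [hi [H0 Hs Hlh Hhi HY]]]]].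
have Y0 : (0:A) \in Y.
  by apply/HY; exists 0, 0; split => //; rewrite mulr0z addr0.
split => // fs Hfs.
have Pw : pairwise (fun x y : A => (y - x) \notin Y) fs.
  apply/(pairwiseP 0) => i j; rewrite -!topredE /= => Hi Hj ij.
  exact: (Hfs j i Hj ij).
rewrite -size_filter.
have := pairwise_filter (fun f => in_translate Y f 0) Pw.
have := filter_all (fun f => in_translate Y f 0) fs.
move: (filter _ fs) => s.
case: s => [|x [|y [|z s]]] //=.
rewrite /in_translate !sub0r.
move=> /and4P [/HY [hx [tx [hxH Htx Ex]]] /HY [hy [ty [hyH Hty Ey]]] /HY [hz [tz [hzH Htz Ez]]] _].
move=> /andP [/andP [rxy /andP [rxz _]] /andP [/andP [ryz _] _]].
have key : forall (u v hu hv : A) (tu tv : int), - u = hu + a *~ tu -> - v = hv + a *~ tv ->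
    hu \in H -> hv \in H -> (v - u) \notin Y -> ~~ (lo <= tu - tv <= hi).
  move=> u v hu hv tu tv Eu Ev huH hvH; apply: contra => Ht; apply/HY.
  exists (hu - hv), (tu - tv); split => //; first exact: Hs.
  have -> : v - u = (- u) - (- v) by rewrite opprK addrC.
  by rewrite Eu Ev mulrzBr opprD addrACA.
have k1 := key _ _ _ _ _ _ Ex Ey hxH hyH rxy.
have k2 := key _ _ _ _ _ _ Ex Ez hxH hzH rxz.
have k3 := key _ _ _ _ _ _ Ey Ez hyH hzH ryz.
exfalso; move: Hhi Htx Hty Htz k1 k2 k3 Hlh; lia.
Qed.

Lemma good0 (A : countZmodType) : good [fset (0 : A)].
Proof.
exists [fset (0 : A)], 0, 0, 0; split => //.
- by rewrite inE.
- by move=> x y; rewrite !inE => /eqP -> /eqP ->; rewrite subr0.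
- move=> x; split.
    by move=> xH; exists x, 0; split => //; rewrite mulr0z addr0.
  by move=> [h [t [hH _ ->]]]; rewrite mul0rz addr0.
Qed.

Lemma good_step {A : countZmodType} {Y : {fset A}} : infinite_type A -> good Y ->
  exists Y', [/\ good Y', Y `<=` Y' & (#|` Y| < #|` Y'| <= 2 * #|` Y|)%N].
Proof.
move=> Hinf [H [a [lo [hi [H0 Hs Hlh Hhi HY]]]]].
have Hadd : forall x y, x \in H -> y \in H -> x + y \in H.
  move=> x y xH yH; have := Hs _ _ xH (Hs _ _ H0 yH); by rewrite sub0r opprK.
have HsubY : H `<=` Y.
  apply/fsubsetP => h hH; apply/HY; exists h, 0; split => //; by rewrite mulr0z addr0.
set tn : int := if hi == - lo then hi + 1 else lo - 1.
have Htn : (tn = hi + 1 /\ hi = - lo) \/ (tn = lo - 1 /\ hi = 1 - lo).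
  rewrite /tn; case: eqP => h; [left | right]; split => //.
  by move/orP: Hhi => [/eqP|/eqP].
set Z := [fset (h + a *~ tn)%R | h in H].
have cardZ : (#|` Z| <= #|` H|)%N by apply: leq_imfset_card.
have cardH := fsubset_leq_card HsubY.
case: (boolP (Z `<=` Y)) => ZY.
- have [k [Hk kH]] : exists k : int, 0 < k <= hi - lo + 1 /\ a *~ k \in H.
    have : (a *~ tn) \in Y.
      by apply: (fsubsetP ZY); apply/imfsetP; exists 0 => //; rewrite add0r.
    move/HY => [h0 [t0 [h0H Ht0 E]]].
    have E' : a *~ (tn - t0) = h0 by rewrite mulrzBr E addrK.
    case Ht: (0 < tn - t0).
      exists (tn - t0); split; last by rewrite E'.
      move: Ht Ht0 Htn Hlh; lia.
    exists (t0 - tn); split.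
      move: Ht Ht0 Htn Hlh; lia.
    by rewrite -opprB mulrNz E' -sub0r; apply: Hs.
  have red : forall t : int, exists t', lo <= t' <= hi /\ a *~ t - a *~ t' \in H.
    move=> t; exists (lo + modz (t - lo) k); split.
      have m0 : 0 <= (modz (t - lo) k) by apply: modz_ge0; move: Hk; lia.
      have m1 : (modz (t - lo) k < k) by apply: ltz_pmod; move: Hk; lia.
      move: m0 m1 Hk; lia.
    rewrite -mulrzBr.
    have -> : t - (lo + (modz (t - lo) k)) = k * (divz (t - lo) k).
      have := divz_eq (t - lo) k; move=> Ed.
      rewrite mulrC; move: Ed; lia.
    rewrite mulrzA; exact: mulz_in.
  have Yc : forall x y, x \in Y -> y \in Y -> x - y \in Y.
    move=> x y /HY [hx [tx [hxH _ ->]]] /HY [hy [ty [hyH _ ->]]].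
    have [t' [Ht' Hr]] := red (tx - ty).
    apply/HY; exists ((hx - hy) + (a *~ (tx - ty) - a *~ t')), t'; split => //.
      by apply: Hadd => //; apply: Hs.
    by rewrite -[RHS]addrA subrK mulrzBr opprD addrACA.
  have Y0 : (0 : A) \in Y by apply: (fsubsetP HsubY).
  have [b bY] : exists b, b \notin Y.
    apply: NNPP => nb; apply: Hinf; exists (enum_fset Y) => x _.
    apply: NNPP => nx; apply: nb; exists x; exact/negP.
  set B := [fset (y + b)%R | y in Y].
  have bB : b \in B by apply/imfsetP; exists 0 => //; rewrite add0r.
  exists (Y `|` B); split.
  + exists Y, b, 0, 1; split => //.
    move=> x; split.
      rewrite in_fsetU => /orP [xY | /imfsetP [y yY ->]].
        by exists x, 0; split => //; rewrite mulr0z addr0.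
      by exists y, 1; split => //; rewrite mulr1z.
    move=> [h [t [hY Ht ->]]].
    have : t = 0 \/ t = 1 by move: Ht; lia.
    move=> [->|->]; rewrite in_fsetU; apply/orP.
      by left; rewrite mulr0z addr0.
    by right; apply/imfsetP; exists h => //; rewrite mulr1z.
  + exact: fsubsetUl.
  + apply/andP; split.
      apply: fproper_ltn_card; apply: fproperUl; apply/fsubsetPn; by exists b.
    have cB : (#|` B| <= #|` Y|)%N by apply: leq_imfset_card.
    rewrite cardfsU; apply: leq_trans (leq_subr _ _) _; by rewrite mul2n -addnn leq_add2l.
- have memY' : forall lo' hi' : int,
      (forall t, (lo' <= t <= hi') = ((lo <= t <= hi) || (t == tn))) ->
      forall x, x \in Y `|` Z <-> exists h t, [/\ h \in H, lo' <= t <= hi' & x = h + a *~ t].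
    move=> lo' hi' Ht x; split.
      rewrite in_fsetU => /orP [/HY [h [t [hH Ht' ->]]] | /imfsetP [h hH ->]].
        by exists h, t; split => //; rewrite Ht Ht'.
      by exists h, tn; split => //; rewrite Ht eqxx orbT.
    move=> [h [t [hH Ht' ->]]]; rewrite in_fsetU; apply/orP.
    move: Ht'; rewrite Ht => /orP [Ht'|/eqP ->].
      by left; apply/HY; exists h, t.
    by right; apply/imfsetP; exists h.
  exists (Y `|` Z); split.
  + case: Htn => [[E1 E2]|[E1 E2]].
      exists H, a, lo, (hi + 1); split => //.
      * move: Hlh; lia.
      * apply/orP; right; apply/eqP; lia.
      * apply: memY' => t; apply/idP/idP => ?; move: Hlh E1 E2; lia.
    exists H, a, (lo - 1), hi; split => //.
    * move: Hlh; lia.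
    * apply/orP; left; apply/eqP; lia.
    * apply: memY' => t; apply/idP/idP => ?; move: Hlh E1 E2; lia.
  + exact: fsubsetUl.
  + apply/andP; split; first by apply: fproper_ltn_card; apply: fproperUl.
    rewrite cardfsU; apply: leq_trans (leq_subr _ _) _; rewrite mul2n -addnn leq_add2l; exact: leq_trans cardZ cardH.
Qed.

Local Open Scope fset_scope.
Theorem proposition2p11 (A : countZmodType) :
  infinite_type A -> locally_finite A ->
  exists Y : nat -> {fset A},
    (forall n, indiv_incompressible 4 (Y n)) /\
    (forall n, Y n `<=` Y n.+1) /\
    (forall n, (#|` Y n| < #|` Y n.+1| <= 2 * #|` Y n|)%N).
Proof.
move=> Hinf _.
have step : forall p : {Y : {fset A} | good Y}, {q : {Y : {fset A} | good Y} |
    sval p `<=` sval q /\ (#|` sval p| < #|` sval q| <= 2 * #|` sval p|)%N}.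
  move=> [Y gY].
  have [Y' HY'] := constructive_indefinite_description _ (good_step Hinf gY).
  case: HY' => g s c.
  by exists (exist _ Y' g).
pose f n := iter n (fun p => sval (step p)) (exist _ [fset (0 : A)] (good0 A)).
exists (fun n => sval (f n)); split; [|split].
- move=> n; apply: good_incomp; exact: (svalP (f n)).
- move=> n; exact: (svalP (step (f n))).1.
- move=> n; exact: (svalP (step (f n))).2.
Qed.
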